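(* Consider the multi-sender unicast index-coding instance with $N=5$ messages, $K=4$ senders with $\mathcal S_1=\{1,2,3\}$, $\mathcal S_2=\{2,3,4\}$, $\mathcal S_3=\{1,2\}$, $\mathcal S_4=\{2,4,5\}$, each with link capacity $C_k=1$, and receiver side information $\mathcal A_1=\{4,5\}$, $\mathcal A_2=\{1,3,5\}$, $\mathcal A_3=\{1,2\}$, $\mathcal A_4=\{2,3,5\}$, $\mathcal A_5=\{3\}$. Its capacity region is $$\mathcal C=\left\{(R_1,\dots,R_5)\in\mathbb R_+^5:\begin{array}{l}R_1\le2,\ R_3\le2,\ R_5\le1,\ R_1+R_3\le3,\ R_4+R_5\le2,\\ R_1+R_2+R_5\le4,\ R_2+R_4+R_5\le4,\ R_3+R_4+R_5\le3\end{array}\right\}.$$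
   Context: Model. $N$ independent messages $M_1,\dots,M_N$, $M_j$ uniform on $[1:2^{nR_j}]$ ($n$ the block length). Sender $k$ knows the messages $M_i$, $i\in\mathcal S_k$, and sends an index $L_k=f_k((M_i)_{i\in\mathcal S_k})\in[1:2^{nC_k})=\{1,\dots,2^{\lfloor nC_k\rfloor}\}$ over a noiseless broadcast link reaching all receivers. Receiver $j$ knows $M_i$, $i\in\mathcal A_j$, and must output an estimate $\hat M_j=g_j(L_1,\dots,L_K,(M_i)_{i\in\mathcal A_j})$ of $M_j$. A rate tuple is achievable if there exist such codes with $\Pr[(\hat M_1,\dots,\hat M_N)\ne(M_1,\dots,M_N)]\to0$ as $n\to\infty$; the capacity region $\mathcal C$ is the closure of the set of achievable rate tuples. *)

(* Defs.v *)
From Stdlib Require Import Reals Lra Lia ZArith Arith List.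
Import ListNotations.
Open Scope R_scope.

(* floor of a real, as a natural number (negative values mapped to 0) *)
Definition nfloor (x : R) : nat := Z.to_nat (Int_part x).

Fixpoint tuples (sz : list nat) : list (list nat) :=
  match sz with
  | [] => [[]]
  | s :: sz' => flat_map (fun x => map (cons x) (tuples sz')) (seq 0 s)
  end.

(* Index-coding instance: messages/receivers are indexed 0..N-1 (N = length A),
   senders 0..K-1 (K = length S).  S k = messages known to sender k,
   A j = side information of receiver j, C k = link capacity of sender k.
   A message M_j takes values in a set of size 2^{floor(n R_j)} (encoded as
   0..size-1), index L_k takes values in a set of size 2^{floor(n C_k)}. *)

Definition msg_sizes (N n : nat) (Rt : nat -> R) : list nat :=
  map (fun j => (2 ^ nfloor (INR n * Rt j))%nat) (seq 0 N).

Definition agree_on (I : list nat) (m m' : list nat) : Prop :=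
  forall i, In i I -> nth i m 0%nat = nth i m' 0%nat.

Definition valid_code (S A : list (list nat)) (C : list R) (n : nat) (Rt : nat -> R)
    (fs : list (list nat -> nat)) (gs : list (list nat -> list nat -> nat)) : Prop :=
  length fs = length S /\ length gs = length A /\
  (forall k, (k < length S)%nat ->
     (forall m m', agree_on (nth k S []) m m' ->
        nth k fs (fun _ => 0%nat) m = nth k fs (fun _ => 0%nat) m') /\
     (forall m, In m (tuples (msg_sizes (length A) n Rt)) ->
        (nth k fs (fun _ => 0%nat) m < 2 ^ nfloor (INR n * nth k C 0%R))%nat)) /\
  (forall j, (j < length A)%nat ->
     forall l m m', agree_on (nth j A []) m m' ->
        nth j gs (fun _ _ => 0%nat) l m = nth j gs (fun _ _ => 0%nat) l m').

Definition decodes_ok (N : nat) (fs : list (list nat -> nat))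
    (gs : list (list nat -> list nat -> nat)) (m : list nat) : bool :=
  forallb (fun j => Nat.eqb (nth j gs (fun _ _ => 0%nat) (map (fun f => f m) fs) m)
                            (nth j m 0%nat))
          (seq 0 N).

(* Error probability under independent uniform messages. *)
Definition error_prob (N n : nat) (Rt : nat -> R)
    (fs : list (list nat -> nat)) (gs : list (list nat -> list nat -> nat)) : R :=
  let T := tuples (msg_sizes N n Rt) in
  INR (length (filter (fun m => negb (decodes_ok N fs gs m)) T)) / INR (length T).

Definition achievable (S A : list (list nat)) (C : list R) (Rt : nat -> R) : Prop :=
  (forall j, (j < length A)%nat -> 0 <= Rt j) /\
  exists (fs : nat -> list (list nat -> nat))
         (gs : nat -> list (list nat -> list nat -> nat)),
    (forall n, valid_code S A C n Rt (fs n) (gs n)) /\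
    Un_cv (fun n => error_prob (length A) n Rt (fs n) (gs n)) 0.

Definition in_capacity_region (S A : list (list nat)) (C : list R) (Rt : nat -> R) : Prop :=
  forall eps, eps > 0 ->
    exists Rt', achievable S A C Rt' /\
      forall j, (j < length A)%nat -> Rabs (Rt j - Rt' j) < eps.

(* The instance of the theorem (0-indexed: message i+1 of the paper is index i). *)
Definition ex_S : list (list nat) := [[0;1;2]; [1;2;3]; [0;1]; [1;3;4]]%nat.
Definition ex_A : list (list nat) := [[3;4]; [0;2;4]; [0;1]; [1;2;4]; [2]]%nat.
Definition ex_C : list R := [1; 1; 1; 1].

(* Main.v *)
Require Import Defs.
From Stdlib Require Import Reals List Arith Lia Lra ZArith Bool.
Import ListNotations.

Open Scope nat_scope.

Definition seg (x i l p : nat) : nat := Nat.shiftl ((Nat.shiftr x i) mod 2 ^ l) p.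

Lemma tb_seg x i l p q :
  Nat.testbit (seg x i l p) q = (p <=? q) && (q <? p + l) && Nat.testbit x (q - p + i).
Proof.
  unfold seg. destruct (Nat.leb_spec p q).
  - rewrite Nat.shiftl_spec_high' by lia. destruct (Nat.ltb_spec q (p + l)).
    + rewrite Nat.mod_pow2_bits_low by lia. rewrite Nat.shiftr_spec'. reflexivity.
    + rewrite Nat.mod_pow2_bits_high by lia. rewrite andb_false_r. reflexivity.
  - rewrite Nat.shiftl_spec_low by lia. reflexivity.
Qed.

Lemma tb_mod x n q : Nat.testbit (x mod 2 ^ n) q = (q <? n) && Nat.testbit x q.
Proof.
  destruct (Nat.ltb_spec q n).
  - rewrite Nat.mod_pow2_bits_low by lia. reflexivity.
  - rewrite Nat.mod_pow2_bits_high by lia. reflexivity.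
Qed.

Lemma tb_high x b q : x < 2 ^ b -> b <= q -> Nat.testbit x q = false.
Proof.
  intros H1 H2. rewrite <- (Nat.mod_small x (2 ^ b)) by exact H1.
  apply Nat.mod_pow2_bits_high. exact H2.
Qed.

Notation X := Nat.lxor.

Section Scheme.
Local Open Scope nat_scope.
Variables (n fs ds us b4 : nat).
Definition o1 := 2 * n - fs.
Definition o2 := o1 + ds.
Definition o3 := o2 + (n - ds - us).

Definition Enc0 a b c := (X (X (seg a 0 fs 0) (seg b 0 n 0)) (seg c 0 n 0)) mod 2 ^ n.
Definition Enc1 b c d := (X (X (X (X (seg d 0 fs 0) (seg b 0 fs 0)) (seg b n (n - fs) fs))
                              (seg c 0 fs 0)) (seg c n (n - fs) fs)) mod 2 ^ n.
Definition Enc2 a b := (X (X (X (seg a fs ds 0) (seg b o1 ds 0)) (seg a (fs + ds) us ds))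
                        (seg b o2 (n - ds - us) (ds + us))) mod 2 ^ n.
Definition Enc3 b d e := (X (X (X (seg b o1 ds 0) (seg d fs ds 0)) (seg e 0 b4 ds))
                        (seg b o3 (n - ds - b4) (ds + b4))) mod 2 ^ n.

Definition Dc0 L0 L1 L2 L3 d :=
  X (X (X (X (X (X (seg L0 0 fs 0) (seg L1 0 fs 0)) (seg d 0 fs 0)) (seg L2 0 ds fs))
     (seg L3 0 ds fs)) (seg d fs ds fs)) (seg L2 ds us (fs + ds)).
Definition Dc1 L0 L1 L2 L3 a c :=
  X (X (X (X (X (X (X (seg L0 0 n 0) (seg a 0 fs 0)) (seg c 0 n 0))
    (seg L1 fs (n - fs) n)) (seg c n (n - fs) n))
    (X (seg L2 0 ds o1) (seg a fs ds o1)))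
    (seg L2 (ds + us) (n - ds - us) o2)) (seg L3 (ds + b4) (n - ds - b4) o3).
Definition Dc2 L0 L1 a b :=
  X (X (X (seg L0 0 n 0) (seg a 0 fs 0)) (seg b 0 n 0))
    (X (seg L1 fs (n - fs) n) (seg b n (n - fs) n)).
Definition Dc3 L1 L3 b c :=
  X (X (X (seg L1 0 fs 0) (seg b 0 fs 0)) (seg c 0 fs 0))
    (X (seg L3 0 ds fs) (seg b o1 ds fs)).
Definition Dc4 L3 := seg L3 ds b4 0.
End Scheme.

Ltac splitb := repeat match goal with
 | |- context [?x <=? ?y] => first [ rewrite (proj2 (Nat.leb_le x y)) by lia
                                   | rewrite (proj2 (Nat.leb_gt x y)) by lia
                                   | destruct (Nat.leb_spec x y) ]; cbn [andb]
 | |- context [?x <? ?y] => first [ rewrite (proj2 (Nat.ltb_lt x y)) by lia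
                                   | rewrite (proj2 (Nat.ltb_ge x y)) by lia
                                   | destruct (Nat.ltb_spec x y) ]; cbn [andb]
 end.

Ltac normidx := repeat match goal with
 | |- context [Nat.testbit ?x ?e1] => match goal with
     | |- context [Nat.testbit x ?e2] =>
        tryif constr_eq e1 e2 then fail else (replace (Nat.testbit x e2) with (Nat.testbit x e1) by (f_equal; lia))
     end
 end.

Ltac finish := repeat match goal with |- context [Nat.testbit ?x ?e] =>
   let h := fresh in destruct (Nat.testbit x e) eqn:h end; reflexivity.

Ltac bitsolve := 
  unfold Dc0, Dc1, Dc2, Dc3, Dc4, Enc0, Enc1, Enc2, Enc3, o3, o2, o1;
  repeat rewrite ?Nat.lxor_spec, ?tb_seg, ?tb_mod;
  splitb; cbn [andb xorb negb]; rewrite ?Nat.sub_0_r, ?Nat.add_0_r; normidx.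

Section Correct.
Local Open Scope nat_scope.
Variables (n fs ds us b0 b1 b2 b3 b4 : nat) (a b c d e : nat).
Hypothesis Hfs : fs <= n.
Hypothesis Hdu : ds + us <= n.
Hypothesis Hde : ds + b4 <= n.
Hypothesis Hb0 : b0 <= fs + ds + us.
Hypothesis Hb1 : b1 + fs + ds + us + b4 <= 4 * n.
Hypothesis Hb2 : b2 + fs <= 2 * n.
Hypothesis Hb3 : b3 <= fs + ds.
Hypothesis Ha : a < 2 ^ b0.
Hypothesis Hb : b < 2 ^ b1.
Hypothesis Hc : c < 2 ^ b2.
Hypothesis Hd : d < 2 ^ b3.
Hypothesis He : e < 2 ^ b4.

Lemma dec0 : Dc0 fs ds us (Enc0 n fs a b c) (Enc1 n fs b c d) (Enc2 n fs ds us a b) (Enc3 n fs ds us b4 b d e) d = a.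
Proof.
  apply Nat.bits_inj; intro q.
  destruct (Nat.lt_ge_cases q fs); [|destruct (Nat.lt_ge_cases q (fs+ds)); [|destruct (Nat.lt_ge_cases q (fs+ds+us))]].
  all: bitsolve; try (rewrite (tb_high a b0) by lia); finish.
Qed.

Lemma dec1 : Dc1 n fs ds us b4 (Enc0 n fs a b c) (Enc1 n fs b c d) (Enc2 n fs ds us a b) (Enc3 n fs ds us b4 b d e) a c = b.
Proof.
  apply Nat.bits_inj; intro q.
  destruct (Nat.lt_ge_cases q fs); [|destruct (Nat.lt_ge_cases q n); [|destruct (Nat.lt_ge_cases q (2*n-fs));
   [|destruct (Nat.lt_ge_cases q (2*n-fs+ds)); [|destruct (Nat.lt_ge_cases q (2*n-fs+ds+(n-ds-us)));
   [|destruct (Nat.lt_ge_cases q (2*n-fs+ds+(n-ds-us)+(n-ds-b4)))]]]]].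
  all: bitsolve; try (rewrite (tb_high b b1) by lia); finish.
Qed.

Lemma dec2 : Dc2 n fs (Enc0 n fs a b c) (Enc1 n fs b c d) a b = c.
Proof.
  apply Nat.bits_inj; intro q.
  destruct (Nat.lt_ge_cases q fs); [|destruct (Nat.lt_ge_cases q n); [|destruct (Nat.lt_ge_cases q (2*n-fs))]].
  all: bitsolve; try (rewrite (tb_high c b2) by lia); finish.
Qed.

Lemma dec3 : Dc3 n fs ds (Enc1 n fs b c d) (Enc3 n fs ds us b4 b d e) b c = d.
Proof.
  apply Nat.bits_inj; intro q.
  destruct (Nat.lt_ge_cases q fs); [|destruct (Nat.lt_ge_cases q (fs+ds))].
  all: bitsolve; try (rewrite (tb_high d b3) by lia); finish.
Qed.

Lemma dec4 : Dc4 ds b4 (Enc3 n fs ds us b4 b d e) = e.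
Proof.
  apply Nat.bits_inj; intro q.
  destruct (Nat.lt_ge_cases q b4).
  all: bitsolve; try (rewrite (tb_high e b4) by lia); finish.
Qed.
End Correct.

Open Scope R_scope.

Lemma in_tuples (sz : list nat) (t : list nat) :
  In t (tuples sz) <-> (length t = length sz /\
    forall i, (i < length sz)%nat -> (nth i t 0 < nth i sz 0)%nat).
Proof.
  revert t; induction sz as [|s sz IH]; intros t; simpl.
  - split.
    + intros [H|[]]; subst; split; [reflexivity| intros; lia].
    + intros [H _]; destruct t; [left; reflexivity| discriminate].
  - rewrite in_flat_map. split.
    + intros [x [Hx Ht]]. apply in_map_iff in Ht. destruct Ht as [t' [<- Ht']].
      apply in_seq in Hx. apply IH in Ht'. destruct Ht' as [Hl Hn].
      split; [simpl; lia|]. intros [|i] Hi; simpl; [lia|]. apply Hn; lia.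
    + intros [Hl Hn]. destruct t as [|x t]; [discriminate|].
      exists x. split.
      * apply in_seq. specialize (Hn 0%nat ltac:(lia)). simpl in Hn. lia.
      * apply in_map. apply IH. simpl in Hl. split; [lia|].
        intros i Hi. apply (Hn (S i)). lia.
Qed.

Lemma length_tuples sz : length (tuples sz) = fold_right Nat.mul 1%nat sz.
Proof.
  induction sz as [|s sz IH]; simpl; [reflexivity|].
  rewrite (flat_map_constant_length (c := length (tuples sz))).
  - rewrite length_seq, IH. reflexivity.
  - intros x _. rewrite length_map. reflexivity.
Qed.

Lemma NoDup_tuples sz : NoDup (tuples sz).
Proof.
  induction sz as [|s sz IH]; simpl.
  - constructor; [simpl; tauto| constructor].
  - generalize (seq_NoDup s 0). generalize (seq 0 s). intros l Hl.
    induction l as [|x l IHl]; simpl; [constructor|].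
    inversion Hl; subst. apply NoDup_app.
    + apply NoDup_map_NoDup_ForallPairs; [|exact IH].
      intros a b _ _ H. injection H; auto.
    + apply IHl; assumption.
    + intros a Ha Hb. apply in_map_iff in Ha. destruct Ha as [t [<- _]].
      apply in_flat_map in Hb. destruct Hb as [y [Hy Hy']].
      apply in_map_iff in Hy'. destruct Hy' as [t' [E _]]. injection E; intros; subst.
      contradiction.
Qed.

Lemma count_inj (T T' : list (list nat)) (P : list nat -> bool) (phi : list nat -> list nat) :
  NoDup T ->
  (forall m, In m T -> P m = true -> In (phi m) T') ->
  (forall m m', In m T -> In m' T -> P m = true -> P m' = true -> phi m = phi m' -> m = m') ->
  (length (filter P T) <= length T')%nat.
Proof.
  intros HT Hin Hinj.
  rewrite <- (length_map phi).
  apply NoDup_incl_length.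
  - apply NoDup_map_NoDup_ForallPairs.
    + intros a b Ha Hb E. apply filter_In in Ha, Hb.
      apply Hinj; tauto.
    + apply NoDup_filter; exact HT.
  - intros y Hy. apply in_map_iff in Hy. destruct Hy as [m [<- Hm]].
    apply filter_In in Hm. apply Hin; tauto.
Qed.

Lemma nfloor_spec x : 0 <= x -> INR (nfloor x) <= x /\ x - 1 < INR (nfloor x).
Proof.
  intros Hx. unfold nfloor. destruct (base_Int_part x) as [H1 H2].
  assert (Hz : (0 <= Int_part x)%Z).
  { apply le_IZR. destruct (Rle_or_lt 0 (IZR (Int_part x))) as [h|h]; [exact h|].
    exfalso. assert (IZR (Int_part x) <= -1).
    { apply IZR_le. apply lt_IZR in h. lia. }
    lra. }
  rewrite INR_IZR_INZ, Z2Nat.id by exact Hz. lra.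
Qed.

Lemma nfloor_0 : nfloor 0 = 0%nat.
Proof. unfold nfloor. replace 0 with (INR 0) by reflexivity. rewrite Int_part_INR. reflexivity. Qed.

Lemma nfloor_INR n : nfloor (INR n * 1) = n.
Proof. unfold nfloor. rewrite Rmult_1_r, Int_part_INR. apply Nat2Z.id. Qed.

Lemma dok (f0 f1 f2 f3 : list nat -> nat) (g0 g1 g2 g3 g4 : list nat -> list nat -> nat) x0 x1 x2 x3 x4 :
  decodes_ok 5 [f0;f1;f2;f3] [g0;g1;g2;g3;g4] [x0;x1;x2;x3;x4] = true ->
  let m := [x0;x1;x2;x3;x4] in let L := [f0 m; f1 m; f2 m; f3 m] in
  g0 L m = x0 /\ g1 L m = x1 /\ g2 L m = x2 /\ g3 L m = x3 /\ g4 L m = x4.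
Proof.
  unfold decodes_ok; simpl. rewrite !Bool.andb_true_iff, !Nat.eqb_eq. tauto.
Qed.

Definition bsz n (Rt : nat -> R) j := nfloor (INR n * Rt j).

Lemma msg_sizes5 n Rt : msg_sizes 5 n Rt =
  [2 ^ bsz n Rt 0; 2 ^ bsz n Rt 1; 2 ^ bsz n Rt 2; 2 ^ bsz n Rt 3; 2 ^ bsz n Rt 4]%nat.
Proof. reflexivity. Qed.

Ltac setup H :=
  let Hlf := fresh in let Hlg := fresh in let Henc := fresh in let Hdec := fresh in
  destruct H as [Hlf [Hlg [Henc Hdec]]];
  match goal with |- context [filter (decodes_ok _ ?fs ?gs) _] =>
    destruct fs as [|f0 [|f1 [|f2 [|f3 [|]]]]]; simpl in Hlf; try discriminate;
    destruct gs as [|g0 [|g1 [|g2 [|g3 [|g4 [|]]]]]]; simpl in Hlg; try discriminate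
  end;
  change (length ex_A) with 5%nat in *; change (length ex_S) with 4%nat in *;
  pose proof (proj1 (Henc 0%nat ltac:(lia))) as E0;
  pose proof (proj1 (Henc 1%nat ltac:(lia))) as E1;
  pose proof (proj1 (Henc 2%nat ltac:(lia))) as E2;
  pose proof (proj1 (Henc 3%nat ltac:(lia))) as E3;
  pose proof (proj2 (Henc 0%nat ltac:(lia))) as B0;
  pose proof (proj2 (Henc 1%nat ltac:(lia))) as B1;
  pose proof (proj2 (Henc 2%nat ltac:(lia))) as B2;
  pose proof (proj2 (Henc 3%nat ltac:(lia))) as B3;
  pose proof (Hdec 0%nat ltac:(lia)) as D0;
  pose proof (Hdec 1%nat ltac:(lia)) as D1;
  pose proof (Hdec 2%nat ltac:(lia)) as D2;
  pose proof (Hdec 3%nat ltac:(lia)) as D3;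
  pose proof (Hdec 4%nat ltac:(lia)) as D4;
  clear Henc Hdec; cbn [nth ex_S ex_A ex_C] in E0, E1, E2, E3, B0, B1, B2, B3, D0, D1, D2, D3, D4;
  rewrite nfloor_INR in B0, B1, B2, B3;
  rewrite msg_sizes5 in *.

Ltac agr := let i := fresh in let Hi := fresh in
  intros i Hi; simpl in Hi; intuition subst; simpl; congruence.

Ltac mem5 Hm := apply in_tuples in Hm; simpl in Hm;
  let Hl := fresh in let Hn := fresh in destruct Hm as [Hl Hn];
  let H0 := fresh in let H1 := fresh in let H2 := fresh in let H3 := fresh in let H4 := fresh in
  pose proof (Hn 0%nat ltac:(lia)) as H0; pose proof (Hn 1%nat ltac:(lia)) as H1;
  pose proof (Hn 2%nat ltac:(lia)) as H2; pose proof (Hn 3%nat ltac:(lia)) as H3;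
  pose proof (Hn 4%nat ltac:(lia)) as H4; simpl in H0, H1, H2, H3, H4.

Lemma cntB1 n Rt fs gs : valid_code ex_S ex_A ex_C n Rt fs gs ->
  (2 * n + 1 <= bsz n Rt 0)%nat ->
  (2 * length (filter (decodes_ok 5 fs gs) (tuples (msg_sizes 5 n Rt)))
     <= length (tuples (msg_sizes 5 n Rt)))%nat.
Proof.
  intros H Hb. setup H.
  eapply Nat.le_trans; [apply Nat.mul_le_mono_l;
    apply (count_inj _ (tuples [2 ^ bsz n Rt 1; 2 ^ bsz n Rt 2; 2 ^ bsz n Rt 3; 2 ^ bsz n Rt 4; 2^n; 2^n]%nat) _
      (fun m => [nth 1 m 0; nth 2 m 0; nth 3 m 0; nth 4 m 0; f0 m; f2 m]%nat))|].
  - apply NoDup_tuples.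
  - intros m Hm _. pose proof (B0 m Hm). pose proof (B2 m Hm).
    mem5 Hm. apply in_tuples. simpl. split; [reflexivity|].
    intros i Hi. do 6 (destruct i as [|i]; [simpl; assumption|]). lia.
  - intros m m' Hm Hm' Pm Pm' E.
    apply in_tuples in Hm, Hm'. destruct Hm as [Hm _], Hm' as [Hm' _].
    destruct m as [|x0 [|x1 [|x2 [|x3 [|x4 [|]]]]]]; simpl in Hm; try discriminate.
    destruct m' as [|y0 [|y1 [|y2 [|y3 [|y4 [|]]]]]]; simpl in Hm'; try discriminate.
    simpl in E. injection E as e1 e2 e3 e4 l0 l2. subst y1 y2 y3 y4.
    apply dok in Pm, Pm'. cbv zeta in Pm, Pm'.
    destruct Pm as [P0 [P1 [P2 [P3 P4]]]], Pm' as [Q0 [Q1 [Q2 [Q3 Q4]]]].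
    assert (l1 : f1 [x0;x1;x2;x3;x4] = f1 [y0;x1;x2;x3;x4]) by (apply E1; agr).
    assert (l3 : f3 [x0;x1;x2;x3;x4] = f3 [y0;x1;x2;x3;x4]) by (apply E3; agr).
    assert (ex0 : x0 = y0) by (rewrite <- P0, <- Q0, l0, l1, l2, l3; apply D0; agr).
    subst y0.
    reflexivity.
  - rewrite !length_tuples. simpl.
    assert (2 * (2^n * (2^n)) <= 2 ^ bsz n Rt 0)%nat.
    { assert (Ej : (2 ^ bsz n Rt 0 = 2 ^ (bsz n Rt 0))%nat) by (rewrite ?Nat.pow_add_r; ring).
      try rewrite Ej. replace (2 * (2^n * (2^n)))%nat with (2 ^ (2 * n + 1))%nat.
      - apply Nat.pow_le_mono_r; lia.
      - rewrite Nat.pow_add_r, Nat.pow_1_r. replace (2 * n)%nat with ((n + (n)))%nat by lia.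
        rewrite ?Nat.pow_add_r. ring. }
    set (P := (2 ^ bsz n Rt 1 * 2 ^ bsz n Rt 2 * 2 ^ bsz n Rt 3 * 2 ^ bsz n Rt 4)%nat).
    apply Nat.le_trans with (P * (2 * (2^n * (2^n))))%nat; [apply Nat.eq_le_incl; unfold P; ring|].
    apply Nat.le_trans with (P * (2 ^ bsz n Rt 0))%nat; [apply Nat.mul_le_mono_l; assumption|].
    apply Nat.eq_le_incl; unfold P; ring.
Qed.

Lemma cntB2 n Rt fs gs : valid_code ex_S ex_A ex_C n Rt fs gs ->
  (2 * n + 1 <= bsz n Rt 2)%nat ->
  (2 * length (filter (decodes_ok 5 fs gs) (tuples (msg_sizes 5 n Rt)))
     <= length (tuples (msg_sizes 5 n Rt)))%nat.
Proof.
  intros H Hb. setup H.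
  eapply Nat.le_trans; [apply Nat.mul_le_mono_l;
    apply (count_inj _ (tuples [2 ^ bsz n Rt 0; 2 ^ bsz n Rt 1; 2 ^ bsz n Rt 3; 2 ^ bsz n Rt 4; 2^n; 2^n]%nat) _
      (fun m => [nth 0 m 0; nth 1 m 0; nth 3 m 0; nth 4 m 0; f0 m; f1 m]%nat))|].
  - apply NoDup_tuples.
  - intros m Hm _. pose proof (B0 m Hm). pose proof (B1 m Hm).
    mem5 Hm. apply in_tuples. simpl. split; [reflexivity|].
    intros i Hi. do 6 (destruct i as [|i]; [simpl; assumption|]). lia.
  - intros m m' Hm Hm' Pm Pm' E.
    apply in_tuples in Hm, Hm'. destruct Hm as [Hm _], Hm' as [Hm' _].
    destruct m as [|x0 [|x1 [|x2 [|x3 [|x4 [|]]]]]]; simpl in Hm; try discriminate.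
    destruct m' as [|y0 [|y1 [|y2 [|y3 [|y4 [|]]]]]]; simpl in Hm'; try discriminate.
    simpl in E. injection E as e0 e1 e3 e4 l0 l1. subst y0 y1 y3 y4.
    apply dok in Pm, Pm'. cbv zeta in Pm, Pm'.
    destruct Pm as [P0 [P1 [P2 [P3 P4]]]], Pm' as [Q0 [Q1 [Q2 [Q3 Q4]]]].
    assert (l2 : f2 [x0;x1;x2;x3;x4] = f2 [x0;x1;y2;x3;x4]) by (apply E2; agr).
    assert (l3 : f3 [x0;x1;x2;x3;x4] = f3 [x0;x1;y2;x3;x4]) by (apply E3; agr).
    assert (ex2 : x2 = y2) by (rewrite <- P2, <- Q2, l0, l1, l2, l3; apply D2; agr).
    subst y2.
    reflexivity.
  - rewrite !length_tuples. simpl.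
    assert (2 * (2^n * (2^n)) <= 2 ^ bsz n Rt 2)%nat.
    { assert (Ej : (2 ^ bsz n Rt 2 = 2 ^ (bsz n Rt 2))%nat) by (rewrite ?Nat.pow_add_r; ring).
      try rewrite Ej. replace (2 * (2^n * (2^n)))%nat with (2 ^ (2 * n + 1))%nat.
      - apply Nat.pow_le_mono_r; lia.
      - rewrite Nat.pow_add_r, Nat.pow_1_r. replace (2 * n)%nat with ((n + (n)))%nat by lia.
        rewrite ?Nat.pow_add_r. ring. }
    set (P := (2 ^ bsz n Rt 0 * 2 ^ bsz n Rt 1 * 2 ^ bsz n Rt 3 * 2 ^ bsz n Rt 4)%nat).
    apply Nat.le_trans with (P * (2 * (2^n * (2^n))))%nat; [apply Nat.eq_le_incl; unfold P; ring|].
    apply Nat.le_trans with (P * (2 ^ bsz n Rt 2))%nat; [apply Nat.mul_le_mono_l; assumption|].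
    apply Nat.eq_le_incl; unfold P; ring.
Qed.

Lemma cntB3 n Rt fs gs : valid_code ex_S ex_A ex_C n Rt fs gs ->
  (1 * n + 1 <= bsz n Rt 4)%nat ->
  (2 * length (filter (decodes_ok 5 fs gs) (tuples (msg_sizes 5 n Rt)))
     <= length (tuples (msg_sizes 5 n Rt)))%nat.
Proof.
  intros H Hb. setup H.
  eapply Nat.le_trans; [apply Nat.mul_le_mono_l;
    apply (count_inj _ (tuples [2 ^ bsz n Rt 0; 2 ^ bsz n Rt 1; 2 ^ bsz n Rt 2; 2 ^ bsz n Rt 3; 2^n]%nat) _
      (fun m => [nth 0 m 0; nth 1 m 0; nth 2 m 0; nth 3 m 0; f3 m]%nat))|].
  - apply NoDup_tuples.
  - intros m Hm _. pose proof (B3 m Hm).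
    mem5 Hm. apply in_tuples. simpl. split; [reflexivity|].
    intros i Hi. do 5 (destruct i as [|i]; [simpl; assumption|]). lia.
  - intros m m' Hm Hm' Pm Pm' E.
    apply in_tuples in Hm, Hm'. destruct Hm as [Hm _], Hm' as [Hm' _].
    destruct m as [|x0 [|x1 [|x2 [|x3 [|x4 [|]]]]]]; simpl in Hm; try discriminate.
    destruct m' as [|y0 [|y1 [|y2 [|y3 [|y4 [|]]]]]]; simpl in Hm'; try discriminate.
    simpl in E. injection E as e0 e1 e2 e3 l3. subst y0 y1 y2 y3.
    apply dok in Pm, Pm'. cbv zeta in Pm, Pm'.
    destruct Pm as [P0 [P1 [P2 [P3 P4]]]], Pm' as [Q0 [Q1 [Q2 [Q3 Q4]]]].
    assert (l0 : f0 [x0;x1;x2;x3;x4] = f0 [x0;x1;x2;x3;y4]) by (apply E0; agr).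
    assert (l1 : f1 [x0;x1;x2;x3;x4] = f1 [x0;x1;x2;x3;y4]) by (apply E1; agr).
    assert (l2 : f2 [x0;x1;x2;x3;x4] = f2 [x0;x1;x2;x3;y4]) by (apply E2; agr).
    assert (ex4 : x4 = y4) by (rewrite <- P4, <- Q4, l0, l1, l2, l3; apply D4; agr).
    subst y4.
    reflexivity.
  - rewrite !length_tuples. simpl.
    assert (2 * 2^n <= 2 ^ bsz n Rt 4)%nat.
    { assert (Ej : (2 ^ bsz n Rt 4 = 2 ^ (bsz n Rt 4))%nat) by (rewrite ?Nat.pow_add_r; ring).
      try rewrite Ej. replace (2 * 2^n)%nat with (2 ^ (1 * n + 1))%nat.
      - apply Nat.pow_le_mono_r; lia.
      - rewrite Nat.pow_add_r, Nat.pow_1_r. replace (1 * n)%nat with (n)%nat by lia.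
        rewrite ?Nat.pow_add_r. ring. }
    set (P := (2 ^ bsz n Rt 0 * 2 ^ bsz n Rt 1 * 2 ^ bsz n Rt 2 * 2 ^ bsz n Rt 3)%nat).
    apply Nat.le_trans with (P * (2 * 2^n))%nat; [apply Nat.eq_le_incl; unfold P; ring|].
    apply Nat.le_trans with (P * (2 ^ bsz n Rt 4))%nat; [apply Nat.mul_le_mono_l; assumption|].
    apply Nat.eq_le_incl; unfold P; ring.
Qed.

Lemma cntB4 n Rt fs gs : valid_code ex_S ex_A ex_C n Rt fs gs ->
  (3 * n + 1 <= bsz n Rt 0 + bsz n Rt 2)%nat ->
  (2 * length (filter (decodes_ok 5 fs gs) (tuples (msg_sizes 5 n Rt)))
     <= length (tuples (msg_sizes 5 n Rt)))%nat.
Proof.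
  intros H Hb. setup H.
  eapply Nat.le_trans; [apply Nat.mul_le_mono_l;
    apply (count_inj _ (tuples [2 ^ bsz n Rt 1; 2 ^ bsz n Rt 3; 2 ^ bsz n Rt 4; 2^n; 2^n; 2^n]%nat) _
      (fun m => [nth 1 m 0; nth 3 m 0; nth 4 m 0; f0 m; f1 m; f2 m]%nat))|].
  - apply NoDup_tuples.
  - intros m Hm _. pose proof (B0 m Hm). pose proof (B1 m Hm). pose proof (B2 m Hm).
    mem5 Hm. apply in_tuples. simpl. split; [reflexivity|].
    intros i Hi. do 6 (destruct i as [|i]; [simpl; assumption|]). lia.
  - intros m m' Hm Hm' Pm Pm' E.
    apply in_tuples in Hm, Hm'. destruct Hm as [Hm _], Hm' as [Hm' _].
    destruct m as [|x0 [|x1 [|x2 [|x3 [|x4 [|]]]]]]; simpl in Hm; try discriminate.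
    destruct m' as [|y0 [|y1 [|y2 [|y3 [|y4 [|]]]]]]; simpl in Hm'; try discriminate.
    simpl in E. injection E as e1 e3 e4 l0 l1 l2. subst y1 y3 y4.
    apply dok in Pm, Pm'. cbv zeta in Pm, Pm'.
    destruct Pm as [P0 [P1 [P2 [P3 P4]]]], Pm' as [Q0 [Q1 [Q2 [Q3 Q4]]]].
    assert (l3 : f3 [x0;x1;x2;x3;x4] = f3 [y0;x1;y2;x3;x4]) by (apply E3; agr).
    assert (ex0 : x0 = y0) by (rewrite <- P0, <- Q0, l0, l1, l2, l3; apply D0; agr).
    subst y0.
    assert (ex2 : x2 = y2) by (rewrite <- P2, <- Q2, l0, l1, l2, l3; apply D2; agr).
    subst y2.
    reflexivity.
  - rewrite !length_tuples. simpl.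
    assert (2 * (2^n * (2^n * (2^n))) <= 2 ^ bsz n Rt 0 * 2 ^ bsz n Rt 2)%nat.
    { assert (Ej : (2 ^ bsz n Rt 0 * 2 ^ bsz n Rt 2 = 2 ^ (bsz n Rt 0 + bsz n Rt 2))%nat) by (rewrite ?Nat.pow_add_r; ring).
      try rewrite Ej. replace (2 * (2^n * (2^n * (2^n))))%nat with (2 ^ (3 * n + 1))%nat.
      - apply Nat.pow_le_mono_r; lia.
      - rewrite Nat.pow_add_r, Nat.pow_1_r. replace (3 * n)%nat with ((n + (n + (n))))%nat by lia.
        rewrite ?Nat.pow_add_r. ring. }
    set (P := (2 ^ bsz n Rt 1 * 2 ^ bsz n Rt 3 * 2 ^ bsz n Rt 4)%nat).
    apply Nat.le_trans with (P * (2 * (2^n * (2^n * (2^n)))))%nat; [apply Nat.eq_le_incl; unfold P; ring|].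
    apply Nat.le_trans with (P * (2 ^ bsz n Rt 0 * 2 ^ bsz n Rt 2))%nat; [apply Nat.mul_le_mono_l; assumption|].
    apply Nat.eq_le_incl; unfold P; ring.
Qed.

Lemma cntB5 n Rt fs gs : valid_code ex_S ex_A ex_C n Rt fs gs ->
  (2 * n + 1 <= bsz n Rt 3 + bsz n Rt 4)%nat ->
  (2 * length (filter (decodes_ok 5 fs gs) (tuples (msg_sizes 5 n Rt)))
     <= length (tuples (msg_sizes 5 n Rt)))%nat.
Proof.
  intros H Hb. setup H.
  eapply Nat.le_trans; [apply Nat.mul_le_mono_l;
    apply (count_inj _ (tuples [2 ^ bsz n Rt 0; 2 ^ bsz n Rt 1; 2 ^ bsz n Rt 2; 2^n; 2^n]%nat) _
      (fun m => [nth 0 m 0; nth 1 m 0; nth 2 m 0; f1 m; f3 m]%nat))|].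
  - apply NoDup_tuples.
  - intros m Hm _. pose proof (B1 m Hm). pose proof (B3 m Hm).
    mem5 Hm. apply in_tuples. simpl. split; [reflexivity|].
    intros i Hi. do 5 (destruct i as [|i]; [simpl; assumption|]). lia.
  - intros m m' Hm Hm' Pm Pm' E.
    apply in_tuples in Hm, Hm'. destruct Hm as [Hm _], Hm' as [Hm' _].
    destruct m as [|x0 [|x1 [|x2 [|x3 [|x4 [|]]]]]]; simpl in Hm; try discriminate.
    destruct m' as [|y0 [|y1 [|y2 [|y3 [|y4 [|]]]]]]; simpl in Hm'; try discriminate.
    simpl in E. injection E as e0 e1 e2 l1 l3. subst y0 y1 y2.
    apply dok in Pm, Pm'. cbv zeta in Pm, Pm'.
    destruct Pm as [P0 [P1 [P2 [P3 P4]]]], Pm' as [Q0 [Q1 [Q2 [Q3 Q4]]]].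
    assert (l0 : f0 [x0;x1;x2;x3;x4] = f0 [x0;x1;x2;y3;y4]) by (apply E0; agr).
    assert (l2 : f2 [x0;x1;x2;x3;x4] = f2 [x0;x1;x2;y3;y4]) by (apply E2; agr).
    assert (ex4 : x4 = y4) by (rewrite <- P4, <- Q4, l0, l1, l2, l3; apply D4; agr).
    subst y4.
    assert (ex3 : x3 = y3) by (rewrite <- P3, <- Q3, l0, l1, l2, l3; apply D3; agr).
    subst y3.
    reflexivity.
  - rewrite !length_tuples. simpl.
    assert (2 * (2^n * (2^n)) <= 2 ^ bsz n Rt 3 * 2 ^ bsz n Rt 4)%nat.
    { assert (Ej : (2 ^ bsz n Rt 3 * 2 ^ bsz n Rt 4 = 2 ^ (bsz n Rt 3 + bsz n Rt 4))%nat) by (rewrite ?Nat.pow_add_r; ring).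
      try rewrite Ej. replace (2 * (2^n * (2^n)))%nat with (2 ^ (2 * n + 1))%nat.
      - apply Nat.pow_le_mono_r; lia.
      - rewrite Nat.pow_add_r, Nat.pow_1_r. replace (2 * n)%nat with ((n + (n)))%nat by lia.
        rewrite ?Nat.pow_add_r. ring. }
    set (P := (2 ^ bsz n Rt 0 * 2 ^ bsz n Rt 1 * 2 ^ bsz n Rt 2)%nat).
    apply Nat.le_trans with (P * (2 * (2^n * (2^n))))%nat; [apply Nat.eq_le_incl; unfold P; ring|].
    apply Nat.le_trans with (P * (2 ^ bsz n Rt 3 * 2 ^ bsz n Rt 4))%nat; [apply Nat.mul_le_mono_l; assumption|].
    apply Nat.eq_le_incl; unfold P; ring.
Qed.

Lemma cntB6 n Rt fs gs : valid_code ex_S ex_A ex_C n Rt fs gs ->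
  (4 * n + 1 <= bsz n Rt 0 + bsz n Rt 1 + bsz n Rt 4)%nat ->
  (2 * length (filter (decodes_ok 5 fs gs) (tuples (msg_sizes 5 n Rt)))
     <= length (tuples (msg_sizes 5 n Rt)))%nat.
Proof.
  intros H Hb. setup H.
  eapply Nat.le_trans; [apply Nat.mul_le_mono_l;
    apply (count_inj _ (tuples [2 ^ bsz n Rt 2; 2 ^ bsz n Rt 3; 2^n; 2^n; 2^n; 2^n]%nat) _
      (fun m => [nth 2 m 0; nth 3 m 0; f0 m; f1 m; f2 m; f3 m]%nat))|].
  - apply NoDup_tuples.
  - intros m Hm _. pose proof (B0 m Hm). pose proof (B1 m Hm). pose proof (B2 m Hm). pose proof (B3 m Hm).
    mem5 Hm. apply in_tuples. simpl. split; [reflexivity|].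
    intros i Hi. do 6 (destruct i as [|i]; [simpl; assumption|]). lia.
  - intros m m' Hm Hm' Pm Pm' E.
    apply in_tuples in Hm, Hm'. destruct Hm as [Hm _], Hm' as [Hm' _].
    destruct m as [|x0 [|x1 [|x2 [|x3 [|x4 [|]]]]]]; simpl in Hm; try discriminate.
    destruct m' as [|y0 [|y1 [|y2 [|y3 [|y4 [|]]]]]]; simpl in Hm'; try discriminate.
    simpl in E. injection E as e2 e3 l0 l1 l2 l3. subst y2 y3.
    apply dok in Pm, Pm'. cbv zeta in Pm, Pm'.
    destruct Pm as [P0 [P1 [P2 [P3 P4]]]], Pm' as [Q0 [Q1 [Q2 [Q3 Q4]]]].
    assert (ex4 : x4 = y4) by (rewrite <- P4, <- Q4, l0, l1, l2, l3; apply D4; agr).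
    subst y4.
    assert (ex0 : x0 = y0) by (rewrite <- P0, <- Q0, l0, l1, l2, l3; apply D0; agr).
    subst y0.
    assert (ex1 : x1 = y1) by (rewrite <- P1, <- Q1, l0, l1, l2, l3; apply D1; agr).
    subst y1.
    reflexivity.
  - rewrite !length_tuples. simpl.
    assert (2 * (2^n * (2^n * (2^n * (2^n)))) <= 2 ^ bsz n Rt 0 * 2 ^ bsz n Rt 1 * 2 ^ bsz n Rt 4)%nat.
    { assert (Ej : (2 ^ bsz n Rt 0 * 2 ^ bsz n Rt 1 * 2 ^ bsz n Rt 4 = 2 ^ (bsz n Rt 0 + bsz n Rt 1 + bsz n Rt 4))%nat) by (rewrite ?Nat.pow_add_r; ring).
      try rewrite Ej. replace (2 * (2^n * (2^n * (2^n * (2^n)))))%nat with (2 ^ (4 * n + 1))%nat.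
      - apply Nat.pow_le_mono_r; lia.
      - rewrite Nat.pow_add_r, Nat.pow_1_r. replace (4 * n)%nat with ((n + (n + (n + (n)))))%nat by lia.
        rewrite ?Nat.pow_add_r. ring. }
    set (P := (2 ^ bsz n Rt 2 * 2 ^ bsz n Rt 3)%nat).
    apply Nat.le_trans with (P * (2 * (2^n * (2^n * (2^n * (2^n))))))%nat; [apply Nat.eq_le_incl; unfold P; ring|].
    apply Nat.le_trans with (P * (2 ^ bsz n Rt 0 * 2 ^ bsz n Rt 1 * 2 ^ bsz n Rt 4))%nat; [apply Nat.mul_le_mono_l; assumption|].
    apply Nat.eq_le_incl; unfold P; ring.
Qed.

Lemma cntB7 n Rt fs gs : valid_code ex_S ex_A ex_C n Rt fs gs ->
  (4 * n + 1 <= bsz n Rt 1 + bsz n Rt 3 + bsz n Rt 4)%nat ->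
  (2 * length (filter (decodes_ok 5 fs gs) (tuples (msg_sizes 5 n Rt)))
     <= length (tuples (msg_sizes 5 n Rt)))%nat.
Proof.
  intros H Hb. setup H.
  eapply Nat.le_trans; [apply Nat.mul_le_mono_l;
    apply (count_inj _ (tuples [2 ^ bsz n Rt 0; 2 ^ bsz n Rt 2; 2^n; 2^n; 2^n; 2^n]%nat) _
      (fun m => [nth 0 m 0; nth 2 m 0; f0 m; f1 m; f2 m; f3 m]%nat))|].
  - apply NoDup_tuples.
  - intros m Hm _. pose proof (B0 m Hm). pose proof (B1 m Hm). pose proof (B2 m Hm). pose proof (B3 m Hm).
    mem5 Hm. apply in_tuples. simpl. split; [reflexivity|].
    intros i Hi. do 6 (destruct i as [|i]; [simpl; assumption|]). lia.
  - intros m m' Hm Hm' Pm Pm' E.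
    apply in_tuples in Hm, Hm'. destruct Hm as [Hm _], Hm' as [Hm' _].
    destruct m as [|x0 [|x1 [|x2 [|x3 [|x4 [|]]]]]]; simpl in Hm; try discriminate.
    destruct m' as [|y0 [|y1 [|y2 [|y3 [|y4 [|]]]]]]; simpl in Hm'; try discriminate.
    simpl in E. injection E as e0 e2 l0 l1 l2 l3. subst y0 y2.
    apply dok in Pm, Pm'. cbv zeta in Pm, Pm'.
    destruct Pm as [P0 [P1 [P2 [P3 P4]]]], Pm' as [Q0 [Q1 [Q2 [Q3 Q4]]]].
    assert (ex4 : x4 = y4) by (rewrite <- P4, <- Q4, l0, l1, l2, l3; apply D4; agr).
    subst y4.
    assert (ex1 : x1 = y1) by (rewrite <- P1, <- Q1, l0, l1, l2, l3; apply D1; agr).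
    subst y1.
    assert (ex3 : x3 = y3) by (rewrite <- P3, <- Q3, l0, l1, l2, l3; apply D3; agr).
    subst y3.
    reflexivity.
  - rewrite !length_tuples. simpl.
    assert (2 * (2^n * (2^n * (2^n * (2^n)))) <= 2 ^ bsz n Rt 1 * 2 ^ bsz n Rt 3 * 2 ^ bsz n Rt 4)%nat.
    { assert (Ej : (2 ^ bsz n Rt 1 * 2 ^ bsz n Rt 3 * 2 ^ bsz n Rt 4 = 2 ^ (bsz n Rt 1 + bsz n Rt 3 + bsz n Rt 4))%nat) by (rewrite ?Nat.pow_add_r; ring).
      try rewrite Ej. replace (2 * (2^n * (2^n * (2^n * (2^n)))))%nat with (2 ^ (4 * n + 1))%nat.
      - apply Nat.pow_le_mono_r; lia.
      - rewrite Nat.pow_add_r, Nat.pow_1_r. replace (4 * n)%nat with ((n + (n + (n + (n)))))%nat by lia.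
        rewrite ?Nat.pow_add_r. ring. }
    set (P := (2 ^ bsz n Rt 0 * 2 ^ bsz n Rt 2)%nat).
    apply Nat.le_trans with (P * (2 * (2^n * (2^n * (2^n * (2^n))))))%nat; [apply Nat.eq_le_incl; unfold P; ring|].
    apply Nat.le_trans with (P * (2 ^ bsz n Rt 1 * 2 ^ bsz n Rt 3 * 2 ^ bsz n Rt 4))%nat; [apply Nat.mul_le_mono_l; assumption|].
    apply Nat.eq_le_incl; unfold P; ring.
Qed.

Lemma cntB8 n Rt fs gs : valid_code ex_S ex_A ex_C n Rt fs gs ->
  (3 * n + 1 <= bsz n Rt 2 + bsz n Rt 3 + bsz n Rt 4)%nat ->
  (2 * length (filter (decodes_ok 5 fs gs) (tuples (msg_sizes 5 n Rt)))
     <= length (tuples (msg_sizes 5 n Rt)))%nat.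
Proof.
  intros H Hb. setup H.
  eapply Nat.le_trans; [apply Nat.mul_le_mono_l;
    apply (count_inj _ (tuples [2 ^ bsz n Rt 0; 2 ^ bsz n Rt 1; 2^n; 2^n; 2^n]%nat) _
      (fun m => [nth 0 m 0; nth 1 m 0; f0 m; f1 m; f3 m]%nat))|].
  - apply NoDup_tuples.
  - intros m Hm _. pose proof (B0 m Hm). pose proof (B1 m Hm). pose proof (B3 m Hm).
    mem5 Hm. apply in_tuples. simpl. split; [reflexivity|].
    intros i Hi. do 5 (destruct i as [|i]; [simpl; assumption|]). lia.
  - intros m m' Hm Hm' Pm Pm' E.
    apply in_tuples in Hm, Hm'. destruct Hm as [Hm _], Hm' as [Hm' _].
    destruct m as [|x0 [|x1 [|x2 [|x3 [|x4 [|]]]]]]; simpl in Hm; try discriminate.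
    destruct m' as [|y0 [|y1 [|y2 [|y3 [|y4 [|]]]]]]; simpl in Hm'; try discriminate.
    simpl in E. injection E as e0 e1 l0 l1 l3. subst y0 y1.
    apply dok in Pm, Pm'. cbv zeta in Pm, Pm'.
    destruct Pm as [P0 [P1 [P2 [P3 P4]]]], Pm' as [Q0 [Q1 [Q2 [Q3 Q4]]]].
    assert (l2 : f2 [x0;x1;x2;x3;x4] = f2 [x0;x1;y2;y3;y4]) by (apply E2; agr).
    assert (ex2 : x2 = y2) by (rewrite <- P2, <- Q2, l0, l1, l2, l3; apply D2; agr).
    subst y2.
    assert (ex4 : x4 = y4) by (rewrite <- P4, <- Q4, l0, l1, l2, l3; apply D4; agr).
    subst y4.
    assert (ex3 : x3 = y3) by (rewrite <- P3, <- Q3, l0, l1, l2, l3; apply D3; agr).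
    subst y3.
    reflexivity.
  - rewrite !length_tuples. simpl.
    assert (2 * (2^n * (2^n * (2^n))) <= 2 ^ bsz n Rt 2 * 2 ^ bsz n Rt 3 * 2 ^ bsz n Rt 4)%nat.
    { assert (Ej : (2 ^ bsz n Rt 2 * 2 ^ bsz n Rt 3 * 2 ^ bsz n Rt 4 = 2 ^ (bsz n Rt 2 + bsz n Rt 3 + bsz n Rt 4))%nat) by (rewrite ?Nat.pow_add_r; ring).
      try rewrite Ej. replace (2 * (2^n * (2^n * (2^n))))%nat with (2 ^ (3 * n + 1))%nat.
      - apply Nat.pow_le_mono_r; lia.
      - rewrite Nat.pow_add_r, Nat.pow_1_r. replace (3 * n)%nat with ((n + (n + (n))))%nat by lia.
        rewrite ?Nat.pow_add_r. ring. }
    set (P := (2 ^ bsz n Rt 0 * 2 ^ bsz n Rt 1)%nat).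
    apply Nat.le_trans with (P * (2 * (2^n * (2^n * (2^n)))))%nat; [apply Nat.eq_le_incl; unfold P; ring|].
    apply Nat.le_trans with (P * (2 ^ bsz n Rt 2 * 2 ^ bsz n Rt 3 * 2 ^ bsz n Rt 4))%nat; [apply Nat.mul_le_mono_l; assumption|].
    apply Nat.eq_le_incl; unfold P; ring.
Qed.


Definition sumN n Rt (J : list nat) := fold_right (fun j acc => (bsz n Rt j + acc)%nat) 0%nat J.
Definition sumR (Rt : nat -> R) (J : list nat) := fold_right (fun j acc => Rt j + acc) 0 J.

Lemma sumN_lb n Rt J : (forall j, In j J -> 0 <= Rt j) ->
  INR n * sumR Rt J - INR (length J) <= INR (sumN n Rt J).
Proof.
  unfold sumR, sumN. induction J as [|j J IH]; intros H; cbn [fold_right length]; [simpl; lra|].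
  rewrite plus_INR, S_INR.
  assert (h : 0 <= INR n * Rt j) by (apply Rmult_le_pos; [apply pos_INR| apply H; left; auto]).
  destruct (nfloor_spec _ h). specialize (IH (fun j' Hj => H j' (or_intror Hj))). change (nfloor (INR n * Rt j)) with (bsz n Rt j) in *. rewrite Rmult_plus_distr_l. lra.
Qed.

Lemma pos_tuples n Rt : (0 < length (tuples (msg_sizes 5 n Rt)))%nat.
Proof.
  rewrite length_tuples, msg_sizes5. simpl.
  pose proof (Nat.pow_nonzero 2 (bsz n Rt 0) ltac:(lia)).
  pose proof (Nat.pow_nonzero 2 (bsz n Rt 1) ltac:(lia)).
  pose proof (Nat.pow_nonzero 2 (bsz n Rt 2) ltac:(lia)).
  pose proof (Nat.pow_nonzero 2 (bsz n Rt 3) ltac:(lia)).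
  pose proof (Nat.pow_nonzero 2 (bsz n Rt 4) ltac:(lia)).
  rewrite Nat.mul_1_r. repeat apply Nat.mul_pos_pos; lia.
Qed.

Lemma conv_gen (Rt : nat -> R) (J : list nat) (c : nat) :
  achievable ex_S ex_A ex_C Rt ->
  (forall j, In j J -> (j < 5)%nat) ->
  (forall n fs gs, valid_code ex_S ex_A ex_C n Rt fs gs -> (c * n + 1 <= sumN n Rt J)%nat ->
     (2 * length (filter (decodes_ok 5 fs gs) (tuples (msg_sizes 5 n Rt)))
       <= length (tuples (msg_sizes 5 n Rt)))%nat) ->
  sumR Rt J <= INR c.
Proof.
  intros [Hnn [fs [gs [Hv Hcv]]]] HJ Hcnt.
  change (length ex_A) with 5%nat in *.
  apply Rnot_lt_le. intros Hlt.
  set (dl := sumR Rt J - INR c).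
  assert (Hdl : 0 < dl) by (unfold dl; lra).
  destruct (Hcv (/2) ltac:(lra)) as [N1 HN1].
  set (x := (INR (length J) + 1) / dl).
  assert (Hx : 0 < x) by (unfold x; apply Rdiv_lt_0_compat; [pose proof (pos_INR (length J)); lra| exact Hdl]).
  set (N2 := Z.to_nat (up x)).
  assert (HN2 : x < INR N2).
  { destruct (archimed x) as [h1 h2]. unfold N2.
    assert (hz : (0 <= up x)%Z) by (apply le_IZR; lra).
    rewrite INR_IZR_INZ, Z2Nat.id by exact hz. exact h1. }
  set (n := Nat.max N1 N2).
  assert (Hn1 : (n >= N1)%nat) by (unfold n; lia).
  assert (Hn2 : INR N2 <= INR n) by (apply le_INR; unfold n; lia).
  specialize (HN1 n Hn1).
  assert (Hs : (c * n + 1 < sumN n Rt J)%nat).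
  { apply INR_lt. pose proof (sumN_lb n Rt J (fun j Hj => Hnn j (HJ j Hj))) as h.
    rewrite plus_INR, mult_INR. simpl (INR 1).
    assert (hh : INR n * dl > INR (length J) + 1).
    { unfold x in HN2. apply Rmult_lt_compat_r with (r := dl) in HN2; [|exact Hdl].
      unfold Rdiv in HN2. rewrite Rmult_assoc, Rinv_l, Rmult_1_r in HN2 by lra. nra. }
    unfold dl in hh. nra. }
  specialize (Hcnt n (fs n) (gs n) (Hv n) ltac:(lia)).
  unfold R_dist, error_prob in HN1. rewrite Rminus_0_r in HN1.
  pose proof (filter_length (decodes_ok 5 (fs n) (gs n)) (tuples (msg_sizes 5 n Rt))) as Hfl.
  pose proof (pos_tuples n Rt) as Hpos.
  set (T := tuples (msg_sizes 5 n Rt)) in *.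
  set (good := length (filter (decodes_ok 5 (fs n) (gs n)) T)) in *.
  set (bad := length (filter (fun m => negb (decodes_ok 5 (fs n) (gs n) m)) T)) in *.
  assert (hb : (length T <= 2 * bad)%nat) by lia.
  apply le_INR in hb. apply lt_INR in Hpos. rewrite mult_INR in hb. simpl (INR 0) in Hpos.
  simpl (INR 2) in hb.
  assert (he : / 2 <= INR bad / INR (length T)).
  { apply Rmult_le_reg_r with (r := INR (length T)); [lra|].
    unfold Rdiv. rewrite Rmult_assoc, Rinv_l, Rmult_1_r by lra. lra. }
  assert (h0 : 0 <= INR bad / INR (length T)) by (apply Rmult_le_pos; [apply pos_INR| apply Rlt_le, Rinv_0_lt_compat; lra]).
  rewrite Rabs_right in HN1 by lra. lra.
Qed.

Section Sch.
Variables (Rt : nat -> R) (f d u : R).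
Definition fz n := nfloor (INR n * f).
Definition dz n := nfloor (INR n * d).
Definition uz n := nfloor (INR n * u).

Definition encs n : list (list nat -> nat) :=
  [fun m => Enc0 n (fz n) (nth 0 m 0) (nth 1 m 0) (nth 2 m 0);
   fun m => Enc1 n (fz n) (nth 1 m 0) (nth 2 m 0) (nth 3 m 0);
   fun m => Enc2 n (fz n) (dz n) (uz n) (nth 0 m 0) (nth 1 m 0);
   fun m => Enc3 n (fz n) (dz n) (uz n) (bsz n Rt 4) (nth 1 m 0) (nth 3 m 0) (nth 4 m 0)]%nat.

Definition decs n : list (list nat -> list nat -> nat) :=
  [fun l m => Dc0 (fz n) (dz n) (uz n) (nth 0 l 0) (nth 1 l 0) (nth 2 l 0) (nth 3 l 0) (nth 3 m 0);
   fun l m => Dc1 n (fz n) (dz n) (uz n) (bsz n Rt 4) (nth 0 l 0) (nth 1 l 0) (nth 2 l 0) (nth 3 l 0)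
                 (nth 0 m 0) (nth 2 m 0);
   fun l m => Dc2 n (fz n) (nth 0 l 0) (nth 1 l 0) (nth 0 m 0) (nth 1 m 0);
   fun l m => Dc3 n (fz n) (dz n) (nth 1 l 0) (nth 3 l 0) (nth 1 m 0) (nth 2 m 0);
   fun l m => Dc4 (dz n) (bsz n Rt 4) (nth 3 l 0)]%nat.
End Sch.

Ltac agu H := try rewrite (H 0%nat ltac:(simpl; tauto)); try rewrite (H 1%nat ltac:(simpl; tauto));
  try rewrite (H 2%nat ltac:(simpl; tauto)); try rewrite (H 3%nat ltac:(simpl; tauto));
  try rewrite (H 4%nat ltac:(simpl; tauto)); reflexivity.

Lemma valid_sch Rt f d u n : valid_code ex_S ex_A ex_C n Rt (encs Rt f d u n) (decs Rt f d u n).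
Proof.
  split; [reflexivity|]. split; [reflexivity|]. split.
  - change (length ex_S) with 4%nat. intros k Hk.
    do 4 (destruct k as [|k]; [split; [intros m m' H; cbn [nth ex_S] in H; simpl; agu H
      | intros m _; cbn [nth ex_C]; rewrite nfloor_INR; simpl;
        apply Nat.mod_upper_bound; apply Nat.pow_nonzero; lia]|]). lia.
  - change (length ex_A) with 5%nat. intros j Hj l.
    do 5 (destruct j as [|j]; [intros m m' H; cbn [nth ex_A] in H; simpl; agu H|]). lia.
Qed.

Lemma filter_none {A} (p : A -> bool) l : (forall x, In x l -> p x = false) -> filter p l = [].
Proof.
  induction l as [|x l IH]; intros H; simpl; [reflexivity|].
  rewrite (H x (or_introl eq_refl)). apply IH. intros y Hy. apply H. right. exact Hy.
Qed.

Lemma err_zero Rt f d u n :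
  (fz f n <= n)%nat -> (dz d n + uz u n <= n)%nat -> (dz d n + bsz n Rt 4 <= n)%nat ->
  (bsz n Rt 0 <= fz f n + dz d n + uz u n)%nat ->
  (bsz n Rt 1 + fz f n + dz d n + uz u n + bsz n Rt 4 <= 4 * n)%nat ->
  (bsz n Rt 2 + fz f n <= 2 * n)%nat ->
  (bsz n Rt 3 <= fz f n + dz d n)%nat ->
  error_prob 5 n Rt (encs Rt f d u n) (decs Rt f d u n) = 0.
Proof.
  intros H1 H2 H3 H4 H5 H6 H7. unfold error_prob.
  rewrite filter_none; [simpl; unfold Rdiv; apply Rmult_0_l|].
  intros m Hm. rewrite msg_sizes5 in Hm. apply in_tuples in Hm. destruct Hm as [Hl Hn].
  destruct m as [|x0 [|x1 [|x2 [|x3 [|x4 [|]]]]]]; cbn [length] in Hl; try discriminate.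
  pose proof (Hn 0%nat ltac:(cbn [length]; lia)) as Q0; pose proof (Hn 1%nat ltac:(cbn [length]; lia)) as Q1;
  pose proof (Hn 2%nat ltac:(cbn [length]; lia)) as Q2; pose proof (Hn 3%nat ltac:(cbn [length]; lia)) as Q3;
  pose proof (Hn 4%nat ltac:(cbn [length]; lia)) as Q4; cbn [nth] in Q0, Q1, Q2, Q3, Q4. clear Hn.
  unfold decodes_ok. cbn [seq forallb nth map encs decs].
  rewrite (dec0 n (fz f n) (dz d n) (uz u n) (bsz n Rt 0) (bsz n Rt 1) (bsz n Rt 2) (bsz n Rt 3) (bsz n Rt 4) x0 x1 x2 x3 x4),
    (dec1 n (fz f n) (dz d n) (uz u n) (bsz n Rt 0) (bsz n Rt 1) (bsz n Rt 2) (bsz n Rt 3) (bsz n Rt 4) x0 x1 x2 x3 x4),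
    (dec2 n (fz f n) (dz d n) (uz u n) (bsz n Rt 0) (bsz n Rt 1) (bsz n Rt 2) (bsz n Rt 3) (bsz n Rt 4) x0 x1 x2 x3 x4),
    (dec3 n (fz f n) (dz d n) (uz u n) (bsz n Rt 0) (bsz n Rt 1) (bsz n Rt 2) (bsz n Rt 3) (bsz n Rt 4) x0 x1 x2 x3 x4),
    (dec4 n (fz f n) (dz d n) (uz u n) (bsz n Rt 0) (bsz n Rt 1) (bsz n Rt 2) (bsz n Rt 3) (bsz n Rt 4) x0 x1 x2 x3 x4)
    by assumption.
  rewrite !Nat.eqb_refl. reflexivity.
Qed.

Lemma fl_le x y : 0 <= x -> x <= y -> INR (nfloor x) <= y.
Proof. intros h1 h2. destruct (nfloor_spec x h1). lra. Qed.

Lemma exists_big (x : R) : exists N : nat, forall n, (n >= N)%nat -> x < INR n.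
Proof.
  destruct (Rle_or_lt x 0) as [h|h].
  - exists 1%nat. intros n Hn. apply le_INR in Hn. simpl in Hn. lra.
  - exists (Z.to_nat (up x)). intros n Hn. apply le_INR in Hn.
    destruct (archimed x) as [h1 h2].
    assert (hz : (0 <= up x)%Z) by (apply le_IZR; lra).
    rewrite INR_IZR_INZ, Z2Nat.id in Hn by exact hz. lra.
Qed.

Lemma scheme (Rt : nat -> R) (f d u dl : R) :
  (forall j, (j < 5)%nat -> 0 <= Rt j) -> 0 <= f <= 1 -> 0 <= d -> 0 <= u -> d + u <= 1 ->
  d + Rt 4%nat <= 1 -> Rt 1%nat + Rt 4%nat + f + d + u <= 4 -> Rt 2%nat + f <= 2 -> 0 < dl ->
  (Rt 0%nat = 0 \/ Rt 0%nat + dl <= f + d + u) -> (Rt 3%nat = 0 \/ Rt 3%nat + dl <= f + d) ->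
  achievable ex_S ex_A ex_C Rt.
Proof.
  intros Hnn Hf Hd Hu Hdu Hd4 H14 H2 Hdl H0 H3.
  split; [exact Hnn|].
  exists (encs Rt f d u), (decs Rt f d u). split; [intros n; apply valid_sch|].
  destruct (exists_big (3 / dl)) as [N0 HN0].
  intros eps Heps. exists N0. intros n Hn. specialize (HN0 n Hn).
  assert (Hndl : INR n * dl > 3).
  { apply Rmult_lt_compat_r with (r := dl) in HN0; [|exact Hdl].
    unfold Rdiv in HN0. rewrite Rmult_assoc, Rinv_l, Rmult_1_r in HN0 by lra. lra. }
  pose proof (pos_INR n) as Hn0.
  assert (Hr : forall x, 0 <= x -> 0 <= INR n * x) by (intros; apply Rmult_le_pos; lra).
  pose proof (nfloor_spec _ (Hr f ltac:(lra))) as [F1 F2].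
  pose proof (nfloor_spec _ (Hr d ltac:(lra))) as [D1' D2'].
  pose proof (nfloor_spec _ (Hr u ltac:(lra))) as [U1 U2].
  pose proof (nfloor_spec _ (Hr _ (Hnn 0%nat ltac:(lia)))) as [R01 R02].
  pose proof (nfloor_spec _ (Hr _ (Hnn 1%nat ltac:(lia)))) as [R11 R12].
  pose proof (nfloor_spec _ (Hr _ (Hnn 2%nat ltac:(lia)))) as [R21 R22].
  pose proof (nfloor_spec _ (Hr _ (Hnn 3%nat ltac:(lia)))) as [R31 R32].
  pose proof (nfloor_spec _ (Hr _ (Hnn 4%nat ltac:(lia)))) as [R41 R42].
  change (nfloor (INR n * f)) with (fz f n) in *.
  change (nfloor (INR n * d)) with (dz d n) in *.
  change (nfloor (INR n * u)) with (uz u n) in *.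
  change (nfloor (INR n * Rt 0%nat)) with (bsz n Rt 0) in *.
  change (nfloor (INR n * Rt 1%nat)) with (bsz n Rt 1) in *.
  change (nfloor (INR n * Rt 2%nat)) with (bsz n Rt 2) in *.
  change (nfloor (INR n * Rt 3%nat)) with (bsz n Rt 3) in *.
  change (nfloor (INR n * Rt 4%nat)) with (bsz n Rt 4) in *.
  rewrite err_zero.
  - unfold R_dist. rewrite Rminus_0_r, Rabs_R0. exact Heps.
  - apply INR_le. nra.
  - apply INR_le. rewrite plus_INR. nra.
  - apply INR_le. rewrite plus_INR. nra.
  - destruct H0 as [H0|H0].
    + unfold bsz. rewrite H0, Rmult_0_r, nfloor_0. lia.
    + assert (INR (bsz n Rt 0) < INR (fz f n + dz d n + uz u n + 1)); [|apply INR_lt in H; lia].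
      rewrite !plus_INR. simpl (INR 1). nra.
  - apply INR_le. rewrite !plus_INR, mult_INR. simpl (INR 4). nra.
  - apply INR_le. rewrite !plus_INR, mult_INR. simpl (INR 2). nra.
  - destruct H3 as [H3|H3].
    + unfold bsz. rewrite H3, Rmult_0_r, nfloor_0. lia.
    + assert (INR (bsz n Rt 3) < INR (fz f n + dz d n + 1)); [|apply INR_lt in H; lia].
      rewrite !plus_INR. simpl (INR 1). nra.
Qed.

Lemma ach_bounds Rt : achievable ex_S ex_A ex_C Rt ->
  Rt 0%nat <= 2 /\ Rt 2%nat <= 2 /\ Rt 4%nat <= 1 /\
   Rt 0%nat + Rt 2%nat <= 3 /\ Rt 3%nat + Rt 4%nat <= 2 /\
   Rt 0%nat + Rt 1%nat + Rt 4%nat <= 4 /\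
   Rt 1%nat + Rt 3%nat + Rt 4%nat <= 4 /\
   Rt 2%nat + Rt 3%nat + Rt 4%nat <= 3.
Proof.
  intros H.
  assert (HJ : forall J : list nat, incl J [0;1;2;3;4]%nat -> forall j, In j J -> (j < 5)%nat).
  { intros J HJ j Hj. apply HJ in Hj. simpl in Hj. lia. }
  pose proof (conv_gen Rt [0]%nat 2 H (HJ [0]%nat ltac:(intros x Hx; simpl in *; lia))
    (fun n fs gs Hv Hb => cntB1 n Rt fs gs Hv ltac:(unfold sumN in Hb; simpl in Hb; lia))) as h1.
  pose proof (conv_gen Rt [2]%nat 2 H (HJ [2]%nat ltac:(intros x Hx; simpl in *; lia))
    (fun n fs gs Hv Hb => cntB2 n Rt fs gs Hv ltac:(unfold sumN in Hb; simpl in Hb; lia))) as h2.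
  pose proof (conv_gen Rt [4]%nat 1 H (HJ [4]%nat ltac:(intros x Hx; simpl in *; lia))
    (fun n fs gs Hv Hb => cntB3 n Rt fs gs Hv ltac:(unfold sumN in Hb; simpl in Hb; lia))) as h3.
  pose proof (conv_gen Rt [0;2]%nat 3 H (HJ [0;2]%nat ltac:(intros x Hx; simpl in *; lia))
    (fun n fs gs Hv Hb => cntB4 n Rt fs gs Hv ltac:(unfold sumN in Hb; simpl in Hb; lia))) as h4.
  pose proof (conv_gen Rt [3;4]%nat 2 H (HJ [3;4]%nat ltac:(intros x Hx; simpl in *; lia))
    (fun n fs gs Hv Hb => cntB5 n Rt fs gs Hv ltac:(unfold sumN in Hb; simpl in Hb; lia))) as h5.
  pose proof (conv_gen Rt [0;1;4]%nat 4 H (HJ [0;1;4]%nat ltac:(intros x Hx; simpl in *; lia))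
    (fun n fs gs Hv Hb => cntB6 n Rt fs gs Hv ltac:(unfold sumN in Hb; simpl in Hb; lia))) as h6.
  pose proof (conv_gen Rt [1;3;4]%nat 4 H (HJ [1;3;4]%nat ltac:(intros x Hx; simpl in *; lia))
    (fun n fs gs Hv Hb => cntB7 n Rt fs gs Hv ltac:(unfold sumN in Hb; simpl in Hb; lia))) as h7.
  pose proof (conv_gen Rt [2;3;4]%nat 3 H (HJ [2;3;4]%nat ltac:(intros x Hx; simpl in *; lia))
    (fun n fs gs Hv Hb => cntB8 n Rt fs gs Hv ltac:(unfold sumN in Hb; simpl in Hb; lia))) as h8.
  unfold sumR in *; simpl in h1, h2, h3, h4, h5, h6, h7, h8.
  repeat split; lra.
Qed.

Lemma sum_diff (Rt Rt' : nat -> R) (J : list nat) e :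
  (forall j, In j J -> (j < 5)%nat) -> (forall j, (j < 5)%nat -> Rabs (Rt j - Rt' j) < e) ->
  sumR Rt J - sumR Rt' J <= INR (length J) * e.
Proof.
  intros HJ Hd. unfold sumR. induction J as [|j J IH]; cbn [fold_right length]; [simpl; lra|].
  rewrite S_INR. assert (hj : (j < 5)%nat) by (apply HJ; left; auto).
  pose proof (Hd j hj) as h. apply Rabs_def2 in h.
  assert (IH' := IH (fun j' Hj' => HJ j' (or_intror Hj'))). lra.
Qed.

Lemma close_lin (Rt : nat -> R) (J : list nat) (c : R) :
  (forall j, In j J -> (j < 5)%nat) ->
  in_capacity_region ex_S ex_A ex_C Rt ->
  (forall Rt', achievable ex_S ex_A ex_C Rt' -> sumR Rt' J <= c) -> sumR Rt J <= c.
Proof.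
  intros HJ Hc Hb. apply Rnot_lt_le. intros Hlt.
  set (e := (sumR Rt J - c) / (INR (length J) + 1)).
  assert (He : 0 < e).
  { unfold e. apply Rdiv_lt_0_compat; [lra|]. pose proof (pos_INR (length J)); lra. }
  destruct (Hc e He) as [Rt' [Ha Hd]].
  change (length ex_A) with 5%nat in Hd.
  assert (Hs : sumR Rt J - sumR Rt' J <= INR (length J) * e) by (apply sum_diff; assumption).
  specialize (Hb Rt' Ha).
  assert (INR (length J) * e < sumR Rt J - c).
  { unfold e. unfold Rdiv. rewrite <- Rmult_assoc.
    pose proof (pos_INR (length J)).
    apply Rmult_lt_reg_r with (r := INR (length J) + 1); [lra|].
    rewrite Rmult_assoc, Rinv_l, Rmult_1_r by lra. nra. }
  lra.
Qed.

Lemma close_nn (Rt : nat -> R) j : (j < 5)%nat ->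
  in_capacity_region ex_S ex_A ex_C Rt -> 0 <= Rt j.
Proof.
  intros Hj Hc. apply Rnot_lt_le. intros Hlt.
  destruct (Hc (- Rt j) ltac:(lra)) as [Rt' [[Hnn _] Hd]].
  specialize (Hd j Hj). specialize (Hnn j Hj). apply Rabs_def2 in Hd. lra.
Qed.

Lemma poly_ach (Rt : nat -> R) (eps : R) :
  0 < eps ->
  (0 <= Rt 0%nat /\ 0 <= Rt 1%nat /\ 0 <= Rt 2%nat /\ 0 <= Rt 3%nat /\ 0 <= Rt 4%nat /\
   Rt 0%nat <= 2 /\ Rt 2%nat <= 2 /\ Rt 4%nat <= 1 /\
   Rt 0%nat + Rt 2%nat <= 3 /\ Rt 3%nat + Rt 4%nat <= 2 /\
   Rt 0%nat + Rt 1%nat + Rt 4%nat <= 4 /\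
   Rt 1%nat + Rt 3%nat + Rt 4%nat <= 4 /\
   Rt 2%nat + Rt 3%nat + Rt 4%nat <= 3) ->
  exists Rt', achievable ex_S ex_A ex_C Rt' /\
    forall j, (j < length ex_A)%nat -> Rabs (Rt j - Rt' j) < eps.
Proof.
  intros Heps (h0 & h1 & h2 & h3 & h4 & c1 & c2 & c3 & c4 & c5 & c6 & c7 & c8).
  set (f := Rmax 0 (Rmax ((Rt 0%nat) - 1) ((Rt 3%nat) + (Rt 4%nat) - 1))).
  assert (F : 0 <= f /\ (Rt 0%nat) - 1 <= f /\ (Rt 3%nat) + (Rt 4%nat) - 1 <= f /\ f <= 1 /\ f <= 2 - (Rt 2%nat) /\
              (Rt 1%nat) + (Rt 4%nat) + f <= 4).
  { unfold f, Rmax. repeat destruct (Rle_dec _ _); repeat split; lra. }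
  clearbody f.
  set (d := Rmax 0 ((Rt 3%nat) - f)).
  assert (Dd : 0 <= d /\ (Rt 3%nat) <= f + d /\ d + (Rt 4%nat) <= 1 /\ (Rt 1%nat) + (Rt 4%nat) + f + d <= 4 /\ f + d <= Rmax f (Rt 3%nat)).
  { unfold d, Rmax. repeat destruct (Rle_dec _ _); repeat split; lra. }
  clearbody d.
  set (u := Rmax 0 ((Rt 0%nat) - f - d)).
  assert (Uu : 0 <= u /\ (Rt 0%nat) <= f + d + u /\ d + u <= 1 /\ (Rt 1%nat) + (Rt 4%nat) + f + d + u <= 4).
  { unfold u. unfold Rmax in *. repeat destruct (Rle_dec _ _); repeat split; lra. }
  clearbody u.
  set (dl := eps / 2).
  assert (Hdl : 0 < dl /\ dl < eps) by (unfold dl; split; lra).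
  clearbody dl.
  exists (fun j => Rmax 0 (Rt j - dl)). split.
  - apply (scheme _ f d u dl).
    + intros j _. apply Rmax_l.
    + lra.
    + lra.
    + lra.
    + lra.
    + unfold Rmax. destruct (Rle_dec _ _); lra.
    + unfold Rmax. repeat destruct (Rle_dec _ _); lra.
    + unfold Rmax. destruct (Rle_dec _ _); lra.
    + lra.
    + unfold Rmax. destruct (Rle_dec _ _); [right; lra| left; reflexivity].
    + unfold Rmax. destruct (Rle_dec _ _); [right; lra| left; reflexivity].
  - change (length ex_A) with 5%nat. intros j Hj.
    assert (0 <= Rt j) by (do 5 (destruct j as [|j]; [assumption|]); lia).
    unfold Rmax. destruct (Rle_dec _ _); apply Rabs_def1; lra.
Qed.

Theorem mainTheorem6 (Rt : nat -> R) :
  in_capacity_region ex_S ex_A ex_C Rt <->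
  (0 <= Rt 0%nat /\ 0 <= Rt 1%nat /\ 0 <= Rt 2%nat /\ 0 <= Rt 3%nat /\ 0 <= Rt 4%nat /\
   Rt 0%nat <= 2 /\ Rt 2%nat <= 2 /\ Rt 4%nat <= 1 /\
   Rt 0%nat + Rt 2%nat <= 3 /\ Rt 3%nat + Rt 4%nat <= 2 /\
   Rt 0%nat + Rt 1%nat + Rt 4%nat <= 4 /\
   Rt 1%nat + Rt 3%nat + Rt 4%nat <= 4 /\
   Rt 2%nat + Rt 3%nat + Rt 4%nat <= 3).
Proof.
  split.
  - intros Hc.
    assert (L : forall J c, (forall j, In j J -> (j < 5)%nat) ->
       (forall Rt', achievable ex_S ex_A ex_C Rt' -> sumR Rt' J <= c) -> sumR Rt J <= c)
      by (intros J c HJ Hb; apply close_lin; assumption).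
    pose proof (L [0]%nat 2 ltac:(intros j Hj; simpl in Hj; lia)
      ltac:(intros Rt' Ha; apply ach_bounds in Ha; unfold sumR; simpl; lra)) as k1.
    pose proof (L [2]%nat 2 ltac:(intros j Hj; simpl in Hj; lia)
      ltac:(intros Rt' Ha; apply ach_bounds in Ha; unfold sumR; simpl; lra)) as k2.
    pose proof (L [4]%nat 1 ltac:(intros j Hj; simpl in Hj; lia)
      ltac:(intros Rt' Ha; apply ach_bounds in Ha; unfold sumR; simpl; lra)) as k3.
    pose proof (L [0;2]%nat 3 ltac:(intros j Hj; simpl in Hj; lia)
      ltac:(intros Rt' Ha; apply ach_bounds in Ha; unfold sumR; simpl; lra)) as k4.
    pose proof (L [3;4]%nat 2 ltac:(intros j Hj; simpl in Hj; lia)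
      ltac:(intros Rt' Ha; apply ach_bounds in Ha; unfold sumR; simpl; lra)) as k5.
    pose proof (L [0;1;4]%nat 4 ltac:(intros j Hj; simpl in Hj; lia)
      ltac:(intros Rt' Ha; apply ach_bounds in Ha; unfold sumR; simpl; lra)) as k6.
    pose proof (L [1;3;4]%nat 4 ltac:(intros j Hj; simpl in Hj; lia)
      ltac:(intros Rt' Ha; apply ach_bounds in Ha; unfold sumR; simpl; lra)) as k7.
    pose proof (L [2;3;4]%nat 3 ltac:(intros j Hj; simpl in Hj; lia)
      ltac:(intros Rt' Ha; apply ach_bounds in Ha; unfold sumR; simpl; lra)) as k8.
    unfold sumR in *; simpl in k1, k2, k3, k4, k5, k6, k7, k8.
    pose proof (close_nn Rt 0 ltac:(lia) Hc).
    pose proof (close_nn Rt 1 ltac:(lia) Hc).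
    pose proof (close_nn Rt 2 ltac:(lia) Hc).
    pose proof (close_nn Rt 3 ltac:(lia) Hc).
    pose proof (close_nn Rt 4 ltac:(lia) Hc).
    repeat split; lra.
  - intros H eps Heps. apply poly_ach; assumption.
Qed.
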